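(* For each $f\in\Bbbk[x]$ and $\lambda\in\Bbbk^\times$ there is a unique algebra automorphism $\phi_{f,\lambda}:A\to A$ with $\phi_{f,\lambda}(x)=\lambda x$ and $\phi_{f,\lambda}(y)=\lambda^{N-1}y+f$. Moreover, the map $(f,\lambda)\mapsto\phi_{f,\lambda}$ is an isomorphism of groups from $\Bbbk[x]\bowtie\Bbbk^\times$ onto the automorphism group $\mathrm{Aut}(A)$ (with composition as product).
   Context: Let $\Bbbk$ be a field of characteristic zero and $N\geq1$ an integer. Let $A=A_N$ be the $\Bbbk$-algebra generated by $x,y$ subject to the relation $yx-xy=x^N$. For $g\in\Bbbk[x]$ and $\lambda\in\Bbbk^\times$ write $g\cdot\lambda$ for the polynomial $g(\lambda x)$. The group $\Bbbk[x]\bowtie\Bbbk^\times$ has underlying set $\Bbbk[x]\times\Bbbk^\times$ and product $(f,\lambda)\cdot(g,\mu)=(\mu^{N-1}f+g\cdot\lambda,\ \lambda\mu)$. *)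

(* Defs.v *)
From HB Require Import structures.
From mathcomp Require Import all_boot all_order all_algebra.
Set Implicit Arguments. Unset Strict Implicit. Unset Printing Implicit Defensive.
Import Order.TTheory GRing.Theory Num.Theory.
Local Open Scope ring_scope.

Definition is_alg_hom (k : fieldType) (A B : algType k) (f : A -> B) : Prop :=
  [/\ forall a b, f (a + b) = f a + f b,
      forall (c : k) a, f (c *: a) = c *: f a,
      forall a b, f (a * b) = f a * f b
    & f 1 = 1].

Definition is_alg_aut (k : fieldType) (A : algType k) (f : A -> A) : Prop :=
  is_alg_hom f /\ bijective f.

(* (A, x, y) is a presentation of k<x,y>/(yx - xy = x^N):
   the relation holds and (A,x,y) satisfies the universal property. *)
Definition is_A_N (k : fieldType) (N : nat) (A : algType k) (x y : A) : Prop :=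
  y * x - x * y = x ^+ N /\
  forall (B : algType k) (a b : B), b * a - a * b = a ^+ N ->
    (exists h : A -> B, [/\ is_alg_hom h, h x = a & h y = b]) /\
    (forall h1 h2 : A -> B, is_alg_hom h1 -> is_alg_hom h2 ->
       h1 x = h2 x -> h1 y = h2 y -> h1 =1 h2).

Definition polyA (k : fieldType) (A : algType k) (x : A) (f : {poly k}) : A :=
  \sum_(i < size f) f`_i *: x ^+ i.

(* g . lambda := g(lambda x) *)
Definition poly_scale (k : fieldType) (g : {poly k}) (l : k) : {poly k} :=
  \poly_(i < size g) (l ^+ i * g`_i).

Definition bowtie_mul (k : fieldType) (N : nat) (p q : {poly k} * k) : {poly k} * k :=
  (q.2 ^+ N.-1 *: p.1 + poly_scale q.1 p.2, p.2 * q.2).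

Definition is_phi (k : fieldType) (N : nat) (A : algType k) (x y : A)
  (f : {poly k}) (l : k) (phi : A -> A) : Prop :=
  [/\ is_alg_aut phi, phi x = l *: x & phi y = l ^+ N.-1 *: y + polyA x f].

(* Main.v *)
Require Import Defs.
From HB Require Import structures.
From mathcomp Require Import all_boot all_order all_algebra zify ring.
From mathcomp Require Import boolp.
From Stdlib Require Import ProofIrrelevance.
Import Order.TTheory GRing.Theory Num.Theory.
Local Open Scope ring_scope.
Set Implicit Arguments. Unset Strict Implicit.

Lemma zr (V : zmodType) (a b c d e : V) : a + b + c + d - (a + e) = b + (c + (d - e)).
Proof.
have -> : a + b + c + d = a + (b + c + d) by rewrite !addrA.
by rewrite opprD addrA [_ - a]addrC addKr -!addrA.
Qed.

Lemma zr2 (V : zmodType) (a b c d : V) : (a - b) - (c - d) = (a - c) - (b - d).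
Proof. by rewrite !opprB addrACA [RHS]addrACA (addrC (- b)). Qed.

Section Hom.
Variables (k : fieldType) (B C : algType k) (h : B -> C).
Hypothesis hh : is_alg_hom h.
Lemma homD a b : h (a + b) = h a + h b. Proof. by case: hh. Qed.
Lemma homM a b : h (a * b) = h a * h b. Proof. by case: hh. Qed.
Lemma homZ c a : h (c *: a) = c *: h a. Proof. by case: hh. Qed.
Lemma hom1 : h 1 = 1. Proof. by case: hh. Qed.
Lemma hom0 : h 0 = 0.
Proof. by have := homD 0 0; rewrite addr0 => /eqP; rewrite -subr_eq0 opprD addrA subrr add0r oppr_eq0 => /eqP. Qed.
Lemma homN a : h (- a) = - h a.
Proof. by apply/eqP; rewrite -subr_eq0 opprK -homD addNr hom0. Qed.
Lemma homB a b : h (a - b) = h a - h b. Proof. by rewrite homD homN. Qed.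
Lemma homX a n : h (a ^+ n) = h a ^+ n.
Proof. by elim: n => [|n IH]; rewrite ?expr0 ?hom1 // !exprS homM IH. Qed.
Lemma hom_sum n (F : 'I_n -> B) : h (\sum_(i < n) F i) = \sum_(i < n) h (F i).
Proof. by elim/big_rec2: _ => [|i b c _ <-]; rewrite ?hom0 ?homD. Qed.
Lemma hom_pA a q : h (polyA a q) = polyA (h a) q.
Proof. by rewrite /polyA hom_sum; apply: eq_bigr => i _; rewrite homZ homX. Qed.
End Hom.

Lemma polyA_alg (k : fieldType) (B : algType k) (a : B) f : polyA a f = horner_alg a f.
Proof.
rewrite /horner_alg /horner_morph horner_coef size_map_poly /polyA.
by apply: eq_bigr => i _; rewrite coef_map /= mulr_algl.
Qed.
Lemma polyA0 (k : fieldType) (B : algType k) (q : {poly k}) : polyA (0 : B) q = (q`_0)%:A.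
Proof. by rewrite polyA_alg /horner_alg /horner_morph horner_coef0 coef_map. Qed.

Lemma hom_id (k : fieldType) (B : algType k) : is_alg_hom (@id B).
Proof. by []. Qed.
Lemma hom_comp (k : fieldType) (B C D : algType k) (f : B -> C) (g : C -> D) :
  is_alg_hom f -> is_alg_hom g -> is_alg_hom (g \o f).
Proof.
move=> hf hg; split => /= *; by rewrite ?(homD hf) ?(homD hg) ?(homZ hf) ?(homZ hg)
  ?(homM hf) ?(homM hg) ?(hom1 hf) ?(hom1 hg).
Qed.

Section Gen.
Variables (k : fieldType) (A : algType k) (x y : A).
Inductive gen : A -> Prop :=
| gen1 : gen 1
| genx a : gen a -> gen (x * a)
| geny a : gen a -> gen (y * a)
| genD a b : gen a -> gen b -> gen (a + b)
| genZ (c : k) a : gen a -> gen (c *: a).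
Lemma gen0 : gen 0. Proof. by rewrite -(scale0r 1); apply: genZ; apply: gen1. Qed.
Lemma genM a b : gen a -> gen b -> gen (a * b).
Proof.
move=> ha hb; elim: ha => [|a' _ IH|a' _ IH|a1 a2 _ IH1 _ IH2|c a' _ IH].
- by rewrite mul1r.
- by rewrite -mulrA; apply: genx.
- by rewrite -mulrA; apply: geny.
- by rewrite mulrDl; apply: genD.
- by rewrite -scalerAl; apply: genZ.
Qed.
Lemma genX : gen x. Proof. by rewrite -(mulr1 x); apply: genx; apply: gen1. Qed.
Lemma genY : gen y. Proof. by rewrite -(mulr1 y); apply: geny; apply: gen1. Qed.

Definition genb : pred A := fun a => `[< gen a >].
Lemma genbP a : reflect (gen a) (genb a).
Proof. exact: asboolP. Qed.

Record SubT := MkSub { gval : A; gprop : genb gval }.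
HB.instance Definition _ := [isSub for gval].
HB.instance Definition _ := [Choice of SubT by <:].
Lemma genb_closed : GRing.subsemialg_closed genb.
Proof.
split; [by apply/genbP; apply: gen1 | split; [by apply/genbP; apply: gen0 |] | |].
- by move=> u v /genbP hu /genbP hv; apply/genbP; apply: genD.
- by move=> c u /genbP hu; apply/genbP; apply: genZ.
- by move=> u v /genbP hu /genbP hv; apply/genbP; apply: genM.
Qed.
HB.instance Definition _ := GRing.SubChoice_isSubAlgebra.Build k A genb SubT genb_closed.
Lemma val_hom : is_alg_hom (gval : SubT -> A).
Proof. by split. Qed.
Definition xs := MkSub (introT (genbP _) genX).
Definition ys := MkSub (introT (genbP _) genY).
Lemma rel_sub N : y * x - x * y = x ^+ N -> ys * xs - xs * ys = xs ^+ N.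
Proof.
move=> E; apply: val_inj => /=.
rewrite E; elim: N {E} => [|n IH] //; by rewrite !exprS /= IH.
Qed.
End Gen.

Section EndAlg.
Variables (k : fieldType).
Local Notation VV := {poly {poly k}}.
Definition islin (f : VV -> VV) := (forall u v, f (u + v) = f u + f v) /\ (forall (c : k) u, f (c%:P *: u) = c%:P *: f u).
Record End := MkEnd { efun :> VV -> VV ; elin : islin efun }.
Lemma End_ext (e1 e2 : End) : efun e1 =1 efun e2 -> e1 = e2.
Proof.
case: e1 e2 => f1 p1 [f2 p2] /= /funext E; subst f2.
by rewrite (proof_irrelevance _ p1 p2).
Qed.
HB.instance Definition _ := gen_eqMixin End.
HB.instance Definition _ := gen_choiceMixin End.

Lemma lin0 : islin (fun _ => 0). Proof. by split => *; rewrite ?addr0 ?scaler0. Qed.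
Lemma linD (e1 e2 : End) : islin (fun v => e1 v + e2 v).
Proof.
case: e1 e2 => f1 [a1 s1] [f2 [a2 s2]]; split => /= *.
  by rewrite a1 a2 addrACA.
by rewrite s1 s2 scalerDr.
Qed.
Lemma linN (e1 : End) : islin (fun v => - e1 v).
Proof. case: e1 => f1 [a1 s1]; split => /= *; by rewrite ?a1 ?s1 ?opprD ?scalerN. Qed.
Lemma linI : islin id. Proof. by []. Qed.
Lemma linC (e1 e2 : End) : islin (fun v => e1 (e2 v)).
Proof.
case: e1 e2 => f1 [a1 s1] [f2 [a2 s2]]; split => /= *; by rewrite ?a1 ?a2 ?s1 ?s2.
Qed.
Lemma linZ (c : k) (e1 : End) : islin (fun v => c%:P *: e1 v).
Proof.
case: e1 => f1 [a1 s1]; split => /= *; first by rewrite a1 scalerDr.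
by rewrite s1 !scalerA mulrC.
Qed.
Definition e0 := MkEnd lin0.
Definition eadd e1 e2 := MkEnd (linD e1 e2).
Definition eopp e1 := MkEnd (linN e1).
Definition e1 := MkEnd linI.
Definition emul e1 e2 := MkEnd (linC e1 e2).
Definition escale c e := MkEnd (linZ c e).

Lemma eaddA : associative eadd. Proof. by move=> *; apply: End_ext => v /=; rewrite addrA. Qed.
Lemma eaddC : commutative eadd. Proof. by move=> *; apply: End_ext => v /=; rewrite addrC. Qed.
Lemma eadd0 : left_id e0 eadd. Proof. by move=> *; apply: End_ext => v /=; rewrite add0r. Qed.
Lemma eaddN : left_inverse e0 eopp eadd. Proof. by move=> *; apply: End_ext => v /=; rewrite addNr. Qed.
HB.instance Definition _ := GRing.isZmodule.Build End eaddA eaddC eadd0 eaddN.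
Lemma emulA : associative emul. Proof. by move=> *; apply: End_ext => v. Qed.
Lemma emul1 : left_id e1 emul. Proof. by move=> *; apply: End_ext => v. Qed.
Lemma emulr1 : right_id e1 emul. Proof. by move=> *; apply: End_ext => v. Qed.
Lemma emulDl : left_distributive emul +%R. Proof. by move=> *; apply: End_ext => v. Qed.
Lemma emulDr : right_distributive emul +%R.
Proof. move=> a b c; apply: End_ext => v /=. by case: a => f [af sf] /=; rewrite af. Qed.
Lemma e1_neq0 : e1 != 0.
Proof.
apply/eqP => /(congr1 (fun e : End => efun e 1)) /= /eqP; by rewrite oner_eq0.
Qed.
HB.instance Definition _ := GRing.Zmodule_isNzRing.Build End emulA emul1 emulr1 emulDl emulDr e1_neq0.
Lemma escaleA a b v : escale a (escale b v) = escale (a * b) v.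
Proof. by apply: End_ext => w /=; rewrite scalerA polyCM. Qed.
Lemma escale1 : left_id 1 escale. Proof. by move=> e; apply: End_ext => w /=; rewrite scale1r. Qed.
Lemma escaleDr : right_distributive escale +%R. Proof. by move=> *; apply: End_ext => w /=; rewrite scalerDr. Qed.
Lemma escaleDl v : {morph escale^~ v: a b / a + b}. Proof. by move=> *; apply: End_ext => w /=; rewrite polyCD scalerDl. Qed.
HB.instance Definition _ := GRing.Zmodule_isLmodule.Build k End escaleA escale1 escaleDr escaleDl.
Lemma escaleAl (a : k) (u v : End) : a *: (u * v) = (a *: u) * v.
Proof. by apply: End_ext => w. Qed.
HB.instance Definition _ := GRing.Lmodule_isLalgebra.Build k End escaleAl.
Lemma escaleAr (a : k) (u v : End) : a *: (u * v) = u * (a *: v).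
Proof. apply: End_ext => w /=. by case: u => f [af sf] /=; rewrite sf. Qed.
HB.instance Definition _ := GRing.Lalgebra_isAlgebra.Build k End escaleAr.
Lemma EndM (u v : End) w : (u * v) w = u (v w). Proof. by []. Qed.
Lemma EndD (u v : End) w : (u + v) w = u w + v w. Proof. by []. Qed.
Lemma EndZ c (u : End) w : (c *: u) w = c%:P *: u w. Proof. by []. Qed.
Lemma End1 w : (1 : End) w = w. Proof. by []. Qed.

Lemma End_sum n (F : 'I_n -> End) w : (\sum_(i < n) F i) w = \sum_(i < n) F i w.
Proof. by elim/big_rec2: _ => [|i a b _ <-]. Qed.
Lemma EndN (u : End) w : (- u) w = - u w. Proof. by []. Qed.
Lemma EndB (u v : End) w : (u - v) w = u w - v w. Proof. by []. Qed.
Lemma EndX (u : End) n w : (u ^+ n) w = iter n u w.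
Proof. by elim: n => [|n IH] //; rewrite exprS EndM IH. Qed.

Lemma linaT : islin (fun v => v * 'X).
Proof. by split => *; rewrite ?mulrDl ?scalerAl. Qed.
Definition aT := MkEnd linaT.
Variable N : nat.
Lemma linbD : islin (fun v => 'X^N * v^`() + ('X)%:P * v).
Proof.
split => *; first by rewrite derivD !mulrDr addrACA.
by rewrite derivZ -!scalerAr scalerDr.
Qed.
Definition bD := MkEnd linbD.
Lemma aT_pow n w : (aT ^+ n) w = w * 'X^n.
Proof. by elim: n => [|n IH]; rewrite ?expr0 ?mulr1 // exprS EndM IH /= exprS mulrA mulrAC. Qed.
Lemma rel_End : bD * aT - aT * bD = aT ^+ N.
Proof.
apply: End_ext => w; rewrite EndB !EndM aT_pow /= derivM derivX.
ring.
Qed.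
Lemma bD_pow_1 j : (bD ^+ j) 1 = ('X^j)%:P.
Proof.
elim: j => [|j IH]; first by rewrite expr0 End1.
by rewrite exprS EndM IH /= derivC mulr0 add0r -polyCM exprS.
Qed.
Lemma polyA_aT q w : (polyA aT q) w = w * map_poly polyC q.
Proof.
rewrite /polyA End_sum /map_poly poly_def mulr_sumr; apply: eq_bigr => i _.
by rewrite EndZ aT_pow scalerAr.
Qed.
End EndAlg.

Lemma coef_ps (k : fieldType) (g : {poly k}) l i : (poly_scale g l)`_i = l ^+ i * g`_i.
Proof.
rewrite /poly_scale coef_poly; case: ltnP => // h.
by rewrite nth_default // mulr0.
Qed.
Lemma ps_scale (k : fieldType) (g : {poly k}) c l : poly_scale (c *: g) l = c *: poly_scale g l.
Proof. by apply/polyP => i; rewrite coefZ !coef_ps coefZ mulrCA. Qed.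
Lemma ps_comp (k : fieldType) (g : {poly k}) a b : poly_scale (poly_scale g a) b = poly_scale g (a * b).
Proof. by apply/polyP => i; rewrite !coef_ps mulrA exprMn (mulrC (b ^+ i)). Qed.
Lemma ps1 (k : fieldType) (g : {poly k}) : poly_scale g 1 = g.
Proof. by apply/polyP => i; rewrite coef_ps expr1n mul1r. Qed.
Lemma ps0 (k : fieldType) l : poly_scale (0 : {poly k}) l = 0.
Proof. by apply/polyP => i; rewrite coef_ps coef0 mulr0. Qed.
Lemma polyA_def (k : fieldType) (B : algType k) (a : B) (f : {poly k}) n : (size f <= n)%N ->
  polyA a f = \sum_(i < n) f`_i *: a ^+ i.
Proof.
move=> H; rewrite /polyA (big_ord_widen _ (fun i => f`_i *: a ^+ i) H) big_mkcond.
apply: eq_bigr => i _; case: ifP => // /negbT; rewrite -leqNgt => /(nth_default 0) ->.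
by rewrite scale0r.
Qed.
Lemma polyA_scale (k : fieldType) (B : algType k) (a : B) (g : {poly k}) l :
  polyA (l *: a) g = polyA a (poly_scale g l).
Proof.
rewrite [RHS](@polyA_def _ _ _ _ (size g)) ?size_poly // /polyA.
by apply: eq_bigr => i _; rewrite coef_ps exprZn scalerA mulrC.
Qed.

Lemma hom_inv (k : fieldType) (B : algType k) (h g : B -> B) :
  is_alg_hom h -> cancel h g -> cancel g h -> is_alg_hom g.
Proof.
move=> hh hK Kh; have hi := can_inj hK.
split => *; apply: hi; by rewrite ?(homD hh) ?(homZ hh) ?(homM hh) ?(hom1 hh) ?Kh.
Qed.

Section Main.
Variables (k : fieldType) (N : nat) (A : algType k) (x y : A).
Implicit Types P Q : {poly {poly k}}.
Hypothesis hN : (1 <= N)%N.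
Hypothesis hrel : y * x - x * y = x ^+ N.

Local Notation pA := (polyA x).
Lemma pA_alg f : pA f = horner_alg x f.
Proof.
rewrite /horner_alg /horner_morph horner_coef size_map_poly /polyA.
by apply: eq_bigr => i _; rewrite coef_map /= mulr_algl.
Qed.
Lemma pAD f g : pA (f + g) = pA f + pA g. Proof. by rewrite !pA_alg rmorphD. Qed.
Lemma pAN f : pA (- f) = - pA f. Proof. by rewrite !pA_alg rmorphN. Qed.
Lemma pAB f g : pA (f - g) = pA f - pA g. Proof. by rewrite !pA_alg rmorphB. Qed.
Lemma pAM f g : pA (f * g) = pA f * pA g. Proof. by rewrite !pA_alg rmorphM. Qed.
Lemma pAC c : pA c%:P = c%:A. Proof. by rewrite pA_alg horner_algC. Qed.
Lemma pAZ c f : pA (c *: f) = c *: pA f. Proof. by rewrite -mul_polyC pAM pAC mulr_algl. Qed.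
Lemma pAX : pA 'X = x. Proof. by rewrite pA_alg horner_algX. Qed.
Lemma pAXn n : pA 'X^n = x ^+ n. Proof. by rewrite pA_alg rmorphXn /= horner_algX. Qed.
Lemma pA0 : pA 0 = 0. Proof. by rewrite pA_alg rmorph0. Qed.
Lemma pA1 : pA 1 = 1. Proof. by rewrite pA_alg rmorph1. Qed.
Lemma pA_comm f g : pA f * pA g = pA g * pA f. Proof. by rewrite -!pAM mulrC. Qed.
Lemma pA_commX f : pA f * x = x * pA f. Proof. by have := pA_comm f (GRing.one _ * 'X); rewrite mul1r pAX. Qed.

Definition Dx (q : {poly k}) := 'X^N * q^`().
Lemma yx : y * x = x * y + x ^+ N.
Proof. by rewrite -hrel addrC subrK. Qed.

Lemma y_pA q : y * pA q = pA q * y + pA (Dx q).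
Proof.
elim/poly_ind: q => [|p c IH]; first by rewrite pA0 mulr0 mul0r /Dx deriv0 mulr0 pA0 addr0.
rewrite pAD mulrDr pAM pAX mulrA IH mulrDl -mulrA yx mulrDr pAC mulr_algr.
rewrite /Dx derivMXaddC mulrDr pAD !pAM pAXn pAX mulrDl mulr_algl -mulrA.
rewrite -!addrA; congr (_ + _); first by rewrite mulrA.
have -> : pA p * x ^+ N = x ^+ N * pA p by have := pA_comm p 'X^N; rewrite pAXn.
by rewrite addrA [RHS]addrC.
Qed.

Definition evn n (P : {poly {poly k}}) := \sum_(j < n) pA P`_j * y ^+ j.
Definition ev (P : {poly {poly k}}) := evn (size P) P.
Lemma ev_def n P : (size P <= n)%N -> ev P = evn n P.
Proof.
move=> H; rewrite /ev /evn [LHS](big_ord_widen _ (fun j => pA P`_j * y ^+ j) H) big_mkcond.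
apply: eq_bigr => i _; case: ifP => // /negbT; rewrite -leqNgt => /(nth_default 0) ->.
by rewrite pA0 mul0r.
Qed.
Lemma ev0 : ev 0 = 0. Proof. by rewrite /ev /evn size_poly0 big_ord0. Qed.
Lemma evD P Q : ev (P + Q) = ev P + ev Q.
Proof.
set n := maxn (size P) (size Q).
rewrite (@ev_def n P) ?leq_maxl // (@ev_def n Q) ?leq_maxr //.
rewrite (@ev_def n) ?(leq_trans (size_add _ _)) // /evn -big_split.
by apply: eq_bigr => i _; rewrite coefD pAD mulrDl.
Qed.
Lemma evN P : ev (- P) = - ev P.
Proof.
rewrite (@ev_def (size P) (-P)) ?size_opp // /ev /evn -sumrN.
by apply: eq_bigr => i _; rewrite coefN pAN mulNr.
Qed.
Lemma evB P Q : ev (P - Q) = ev P - ev Q. Proof. by rewrite evD evN. Qed.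
Lemma evZ r P : ev (r *: P) = pA r * ev P.
Proof.
rewrite (@ev_def (size P) (r *: P)) ?size_scale_leq // /ev /evn mulr_sumr.
by apply: eq_bigr => i _; rewrite coefZ pAM mulrA.
Qed.
Lemma evC q : ev q%:P = pA q.
Proof.
rewrite (@ev_def 1) ?size_polyC ?leq_b1 // /evn big_ord1 coefC /= expr0 mulr1 //.
Qed.
Lemma ev1 : ev 1 = 1. Proof. by rewrite evC pA1. Qed.
Lemma size_MX (P : {poly {poly k}}) : (size (P * 'X)%R <= (size P).+1)%N.
Proof. by rewrite (leq_trans (size_polyMleq _ _)) // size_polyX addn2. Qed.
Lemma size_MXn (P : {poly {poly k}}) n : (size (P * 'X^n)%R <= size P + n)%N.
Proof. by rewrite (leq_trans (size_polyMleq _ _)) // size_polyXn addnS. Qed.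
Lemma evMX P : ev (P * 'X) = ev P * y.
Proof.
rewrite (@ev_def (size P).+1 (P * 'X)) ?size_MX // /evn big_ord_recl coefMX /= pA0 mul0r add0r.
rewrite /ev /evn mulr_suml; apply: eq_bigr => i _; rewrite coefMX /= /bump /= add1n -mulrA.
by rewrite exprSr.
Qed.
Lemma evMXn P n : ev (P * 'X^n) = ev P * y ^+ n.
Proof.
elim: n => [|n IH]; first by rewrite expr0 !mulr1.
by rewrite exprSr mulrA evMX IH -mulrA -exprSr.
Qed.

Definition dP (P : {poly {poly k}}) := \poly_(j < size P) Dx P`_j.
Lemma y_ev P : y * ev P = ev (P * 'X) + ev (dP P).
Proof.
rewrite evMX (@ev_def (size P) (dP P)) ?size_poly // /ev /evn mulr_sumr mulr_suml -big_split.
apply: eq_bigr => i _; rewrite coef_poly ltn_ord mulrA y_pA mulrDl -!mulrA.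
by rewrite -exprS exprSr.
Qed.

Definition Fl d (a : A) := exists P, (size P <= d)%N /\ a = ev P.
Lemma Fl_mono d e a : (d <= e)%N -> Fl d a -> Fl e a.
Proof. by move=> de [P [sP ->]]; exists P; split => //; apply: leq_trans de. Qed.
Lemma Fl0 d : Fl d 0. Proof. by exists 0; rewrite size_poly0 ev0. Qed.
Lemma FlD d a b : Fl d a -> Fl d b -> Fl d (a + b).
Proof.
move=> [P [sP ->]] [Q [sQ ->]]; exists (P + Q); rewrite evD; split => //.
by rewrite (leq_trans (size_add _ _)) // geq_max sP sQ.
Qed.
Lemma FlN d a : Fl d a -> Fl d (- a).
Proof. by move=> [P [sP ->]]; exists (- P); rewrite evN size_opp. Qed.
Lemma FlB d a b : Fl d a -> Fl d b -> Fl d (a - b).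
Proof. by move=> ha hb; apply: FlD => //; apply: FlN. Qed.
Lemma Fl_pAl d q a : Fl d a -> Fl d (pA q * a).
Proof.
move=> [P [sP ->]]; exists (q *: P); rewrite evZ; split => //.
exact: leq_trans (size_scale_leq _ _) sP.
Qed.
Lemma Fl_yn d n a : Fl d a -> Fl (d + n) (a * y ^+ n).
Proof.
move=> [P [sP ->]]; exists (P * 'X^n); rewrite evMXn; split => //.
by rewrite (leq_trans (size_MXn _ _)) // leq_add2r.
Qed.
Lemma Fl_y d a : Fl d a -> Fl d.+1 (y * a).
Proof.
move=> [P [sP ->]]; rewrite y_ev; apply: FlD.
  by exists (P * 'X); split => //; rewrite (leq_trans (size_MX _)).
by exists (dP P); split => //; rewrite (leq_trans (size_poly _ _)) // (leq_trans sP).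
Qed.
Lemma Fl_term q j : Fl j.+1 (pA q * y ^+ j).
Proof.
exists (q%:P * 'X^j); rewrite evMXn evC; split => //.
by rewrite (leq_trans (size_MXn _ _)) // size_polyC; case: (q != 0).
Qed.
Lemma Fl_sum d n (F : 'I_n -> A) : (forall i, Fl d (F i)) -> Fl d (\sum_(i < n) F i).
Proof.
move=> H; elim/big_ind: _ => //; [exact: Fl0 | by move=> a b; apply: FlD].
Qed.
Lemma Fl_0 a : Fl 0 a -> a = 0.
Proof. by move=> [P [sP ->]]; move: sP; rewrite leqn0 size_poly_eq0 => /eqP ->; rewrite ev0. Qed.
Lemma Fl_pA q : Fl 1 (pA q).
Proof. by have := Fl_term q 0; rewrite expr0 mulr1. Qed.
Lemma Fl_ev P : Fl (size P) (ev P). Proof. by exists P. Qed.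
Lemma Fl_ymn m n a : Fl n a -> Fl (m + n) (y ^+ m * a).
Proof.
move=> H; elim: m => [|m IH]; first by rewrite expr0 mul1r.
by rewrite exprS -mulrA addSn; apply: Fl_y.
Qed.
Lemma Fl_mul i j a b : Fl i a -> Fl j b -> Fl (i + j).-1 (a * b).
Proof.
case: i => [|i] ha hb; first by rewrite (Fl_0 ha) mul0r; apply: Fl0.
case: ha => P [sP ->]; rewrite /ev /evn mulr_suml addSn /=; apply: Fl_sum => l.
rewrite -mulrA; apply: Fl_pAl; apply: Fl_mono (Fl_ymn l hb).
by rewrite leq_add2r -ltnS (leq_trans (ltn_ord l)).
Qed.

Lemma mcoef_y m (s : {poly k}) : pA (m%:R *: s) * y * y ^+ m.-1 = pA (m%:R *: s) * y ^+ m.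
Proof. by case: m => [|m]; [rewrite scale0r pA0 !mul0r | rewrite -mulrA -exprS]. Qed.

Lemma y_m_pA m q : exists r, Fl m.-1 r /\
  y ^+ m * pA q = pA q * y ^+ m + pA (m%:R *: Dx q) * y ^+ m.-1 + r.
Proof.
elim: m => [|m [r [hr E]]].
  by exists 0; split; [apply: Fl0 | rewrite !expr0 mulr1 mul1r scale0r pA0 mul0r !addr0].
exists (pA (Dx (m%:R *: Dx q)) * y ^+ m.-1 + y * r); split.
  case: m hr E => [|m] hr E.
    by rewrite (Fl_0 hr) mulr0 scale0r /Dx deriv0 mulr0 pA0 mul0r addr0; apply: Fl0.
  apply: FlD; first exact: Fl_term.
  exact: Fl_y.
rewrite exprS -mulrA E !mulrDr !mulrA y_pA y_pA !mulrDl mcoef_y -!mulrA -exprS.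
rewrite -!addrA; congr (_ + _); rewrite !addrA; congr (_ + _); congr (_ + _) => /=.
by rewrite -mulrDl -pAD -{1}[Dx q]scale1r -scalerDl addrC natr1.
Qed.

Lemma Fl_mterm m (s : {poly k}) : Fl m (pA (m%:R *: s) * y ^+ m.-1).
Proof. by case: m => [|m]; [rewrite scale0r pA0 mul0r; apply: Fl0 | apply: Fl_term]. Qed.

Lemma ev_split P : exists r, Fl (size P).-1 r /\ ev P = pA (lead_coef P) * y ^+ (size P).-1 + r.
Proof.
rewrite /lead_coef /ev /evn; case sP: (size P) => [|m].
  by exists 0; split; [apply: Fl0 | rewrite big_ord0 nth_default ?sP // pA0 mul0r addr0].
rewrite big_ord_recr /=; exists (\sum_(i < m) pA P`_i * y ^+ i); split; last by rewrite addrC.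
by apply: Fl_sum => j; apply: Fl_mono (Fl_term _ _); apply: ltn_ord.
Qed.

Hypothesis huniv : forall (B : algType k) (a b : B), b * a - a * b = a ^+ N ->
    (exists h : A -> B, [/\ is_alg_hom h, h x = a & h y = b]) /\
    (forall h1 h2 : A -> B, is_alg_hom h1 -> is_alg_hom h2 ->
       h1 x = h2 x -> h1 y = h2 y -> h1 =1 h2).

Lemma ev_inj0 P : ev P = 0 -> P = 0.
Proof.
have [[h [hh hx hy]] _] := huniv (rel_End k N).
move=> E; have := congr1 (fun a => h a 1) E; rewrite (hom0 hh) /= /ev /evn (hom_sum hh) End_sum.
under eq_bigr => j _ do rewrite (homM hh) (homX hh) (hom_pA hh) hx hy EndM bD_pow_1 polyA_aT.
move=> Z; apply/polyP => j; apply/polyP => i; rewrite !coef0.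
move: Z => /(congr1 (fun p : {poly {poly k}} => p`_i)); rewrite coef_sum coef0.
under eq_bigr => l _ do rewrite coefCM coef_map /=.
move/(congr1 (fun p : {poly k} => p`_j)); rewrite coef_sum coef0.
under eq_bigr => l _ do rewrite mulrC coefCM coefXn.
case: (ltnP j (size P)) => hj; last by rewrite (nth_default 0 hj) coef0.
rewrite (bigD1 (Ordinal hj)) //= eqxx mulr1 big1 ?addr0 // => l /negbTE.
by rewrite -val_eqE /= eq_sym => ->; rewrite mulr0.
Qed.

Lemma ev_inj P Q : ev P = ev Q -> P = Q.
Proof. by move=> E; apply/eqP; rewrite -subr_eq0; apply/eqP/ev_inj0; rewrite evB E subrr. Qed.
Lemma pA_inj f g : pA f = pA g -> f = g.
Proof. by rewrite -!evC => /ev_inj /polyC_inj. Qed.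

Lemma top_nz q d r : q != 0 -> Fl d r -> pA q * y ^+ d + r != 0.
Proof.
move=> nq [R [sR ->]]; apply/eqP; rewrite -evC -evMXn -evD => /ev_inj0 /(congr1 (fun P => P`_d)).
rewrite coefD coefMXn ltnn subnn coefC /= nth_default // addr0 coef0 => E.
by rewrite E eqxx in nq.
Qed.

Lemma top_eq q q' d r r' : Fl d r -> Fl d r' ->
  pA q * y ^+ d + r = pA q' * y ^+ d + r' -> q = q'.
Proof.
move=> hr hr' E; apply/eqP; rewrite -subr_eq0; apply/negPn/negP => nz.
have := top_nz nz (FlB hr hr'); rewrite pAB mulrBl.
by rewrite addrACA -opprD E subrr eqxx.
Qed.

Lemma mul_lead P Q : exists r, Fl ((size P).-1 + (size Q).-1) r /\
  ev P * ev Q = pA (lead_coef P * lead_coef Q) * y ^+ ((size P).-1 + (size Q).-1) + r.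
Proof.
set m := (size P).-1; set n := (size Q).-1.
have [r1 [h1 E1]] := ev_split P; have [r2 [h2 E2]] := ev_split Q.
have [r3 [h3 E3]] := y_m_pA m (lead_coef Q).
exists (pA (lead_coef P) * ((pA (m%:R *: Dx (lead_coef Q)) * y ^+ m.-1 + r3) * y ^+ n)
   + pA (lead_coef P) * (y ^+ m * r2) + r1 * ev Q); split.
  apply: FlD; first apply: FlD.
  - apply: Fl_pAl; apply: Fl_yn; apply: FlD; first exact: Fl_mterm.
    by apply: Fl_mono h3; apply: leq_pred.
  - by apply: Fl_pAl; apply: Fl_ymn.
  - have := Fl_mul h1 (Fl_ev Q); apply: Fl_mono.
    rewrite /n; case: (size Q) => [|sq] /=; last by rewrite addnS.
    by rewrite addn0 leq_pred.
rewrite E1 mulrDl.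
have -> : pA (lead_coef P) * y ^+ (size P).-1 * ev Q =
  pA (lead_coef P) * ((y ^+ m * pA (lead_coef Q)) * y ^+ n) + pA (lead_coef P) * (y ^+ m * r2).
  by rewrite E2 mulrDr -!mulrA.
rewrite E3 !addrA; congr (_ + _ + _).
by rewrite -addrA (mulrDl _ (_ + _)) mulrDr pAM -!mulrA exprD.
Qed.

Lemma oneA_neq0 : (1 : A) != 0. Proof. exact: oner_neq0. Qed.

Lemma span a : exists P, a = ev P.
Proof.
have [[h [hh hx hy]] _] := huniv (rel_sub hrel).
have [_ huniq] := huniv hrel.
have E : (@gval k A x y \o h) a = id a.
  apply: huniq; [exact: hom_comp hh (@val_hom k A x y) | exact: hom_id | by rewrite /= hx | by rewrite /= hy].
have : gen x y a by rewrite -[a]E; apply/genbP; exact: gprop (h a).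
elim => [|a' _ [P ->]|a' _ [P ->]|a1 a2 _ [P ->] _ [Q ->]|c a' _ [P ->]].
- by exists 1; rewrite ev1.
- by exists ('X *: P); rewrite evZ pAX.
- by exists (P * 'X + dP P); rewrite evD y_ev.
- by exists (P + Q); rewrite evD.
- by exists (c%:P *: P); rewrite evZ pAC mulr_algl.
Qed.

Lemma domainA (a b : A) : a * b = 0 -> a = 0 \/ b = 0.
Proof.
have [P ->] := span a; have [Q ->] := span b.
have [->|nP] := eqVneq P 0; first by rewrite ev0; left.
have [->|nQ] := eqVneq Q 0; first by rewrite ev0; right.
have [r [hr ->]] := mul_lead P Q => /eqP; rewrite (negbTE (top_nz _ hr)) //.
by rewrite mulf_neq0 // lead_coef_eq0.
Qed.

Lemma unitA (u w : A) : u * w = 1 -> exists c, c != 0 /\ u = c%:A.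
Proof.
have [P ->] := span u; have [Q ->] := span w.
have [->|nP] := eqVneq P 0; first by rewrite ev0 mul0r => /eqP; rewrite eq_sym (negbTE oneA_neq0).
have [->|nQ] := eqVneq Q 0; first by rewrite ev0 mulr0 => /eqP; rewrite eq_sym (negbTE oneA_neq0).
have [r [hr E]] := mul_lead P Q; rewrite E => E1.
have nl : lead_coef P * lead_coef Q != 0 by rewrite mulf_neq0 // lead_coef_eq0.
case D: ((size P).-1 + (size Q).-1)%N => [|d].
  move: E1 hr; rewrite D expr0 mulr1 => E1 hr; move: E1; rewrite (Fl_0 hr) addr0 -pA1 => /pA_inj E2.
  move: D => /eqP; rewrite addn_eq0 => /andP [/eqP sP _].
  have sl : size (lead_coef P) = 1%N.
    have := @size_mul _ (lead_coef P) (lead_coef Q); rewrite !lead_coef_eq0 => /(_ nP nQ).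
    rewrite E2 size_poly1 => S; move: S.
    have : (0 < size (lead_coef P))%N by rewrite size_poly_gt0 lead_coef_eq0.
    have : (0 < size (lead_coef Q))%N by rewrite size_poly_gt0 lead_coef_eq0.
    move=> hq hp; case: (size (lead_coef P)) hp => // a _; case: (size (lead_coef Q)) hq => // b _; rewrite addSn /= => S; lia.
  have [r1 [h1 ->]] := ev_split P; rewrite sP in h1 *; rewrite expr0 mulr1 (Fl_0 h1) addr0.
  rewrite (size1_polyC (eq_leq sl)) pAC; exists (lead_coef P)`_0; split.
  - by rewrite -polyC_eq0 -(size1_polyC (eq_leq sl)) lead_coef_eq0.
  - by rewrite pA1.
exfalso; rewrite D in hr E1; move: (top_nz nl (FlB hr (Fl_mono (isT : (1 <= d.+1)%N) (Fl_pA 1)))).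
by rewrite pA1 addrA E1 subrr eqxx.
Qed.

Hypothesis hchar : [pchar k] =i pred0.

Lemma comm_term j : Fl j (y ^+ j * x - x * y ^+ j).
Proof.
have [r [hr E]] := y_m_pA j 'X; move: E; rewrite pAX => ->.
rewrite addrAC [_ + _ - x * _]addrAC subrr add0r; apply: FlD; first exact: Fl_mterm.
by apply: Fl_mono hr; apply: leq_pred.
Qed.

Lemma comm_Fl d a : Fl d a -> Fl d.-1 (a * x - x * a).
Proof.
move=> [R [sR ->]]; rewrite /ev /evn mulr_suml mulr_sumr -sumrB; apply: Fl_sum => j.
rewrite mulrA -pA_commX -!mulrA -mulrBr; apply: Fl_pAl; apply: Fl_mono (comm_term j).
by rewrite -ltnS (leq_trans (ltn_ord j)) // (leq_trans sR) // leqSpred.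
Qed.

Lemma central P : ev P * x = x * ev P -> (size P <= 1)%N.
Proof.
move=> C; rewrite leqNgt; apply/negP => s2.
have nP : P != 0 by rewrite -size_poly_gt0 (ltn_trans _ s2).
have [r1 [h1 E1]] := ev_split P.
have [r3 [h3 E3]] := y_m_pA (size P).-1 'X; move: E3; rewrite pAX => E3.
set M := (size P).-1 in h1 E1 h3 E3.
have M1 : (0 < M)%N by rewrite /M -ltnS prednK // (ltn_trans _ s2).
have : ev P * x - x * ev P = 0 by rewrite C subrr.
have -> : ev P * x - x * ev P = pA (lead_coef P * (M%:R *: Dx 'X)) * y ^+ M.-1
    + (pA (lead_coef P) * r3 + (r1 * x - x * r1)).
  rewrite E1 mulrDl mulrDr -!mulrA E3.
  rewrite [x * (_ * _)]mulrA -pA_commX -mulrA !mulrDr [pA _ * (pA _ * _)]mulrA -pAM.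
  by rewrite zr.
move/eqP; apply/negP; apply: top_nz.
  rewrite mulf_neq0 ?lead_coef_eq0 // scaler_eq0 negb_or /Dx derivX mulr1.
  rewrite (pcharf0P _).1 // -lt0n M1 /=.
  by rewrite expf_neq0 // polyX_eq0.
apply: FlD; first exact: Fl_pAl.
by have := comm_Fl h1.
Qed.

Lemma central_pA a : a * x = x * a -> exists f, a = pA f.
Proof.
have [P ->] := span a => /central sP; exists P`_0.
by rewrite (@ev_def 1) // /evn big_ord1 expr0 mulr1.
Qed.

Lemma kerpi (pi : A -> {poly k}) : is_alg_hom pi -> pi x = 0 -> pi y = 'X ->
  forall a, pi a = 0 -> exists b, a = x * b.
Proof.
move=> hp px py a; have [P ->] := span a.
rewrite /ev /evn hom_sum //.
under eq_bigr => i _ do rewrite (homM hp) (homX hp) (hom_pA hp) px polyA0 py.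
have -> : \sum_(i < size P) ((P`_i)`_0)%:A * 'X ^+ i = \poly_(i < size P) (P`_i)`_0.
  by rewrite poly_def; apply: eq_bigr => i _; rewrite mulr_algl.
move=> Z.
have H0 : forall i, (P`_i)`_0 = 0.
  move=> i; case: (ltnP i (size P)) => hi.
    by have := congr1 (fun p : {poly k} => p`_i) Z; rewrite coef_poly hi coef0.
  by rewrite (nth_default 0 hi) coef0.
exists (\sum_(i < size P) pA (P`_i %/ 'X) * y ^+ i).
rewrite mulr_sumr; apply: eq_bigr => i _; rewrite mulrA -pA_commX; have := pAM (P`_i %/ 'X) 'X; rewrite pAX => <-.
rewrite divpK //.
by rewrite -[X in X %| _]subr0 -polyC0 dvdp_XsubCl /root horner_coef0 H0.
Qed.

Lemma pA_commx_poly f : pA f * x - x * pA f = 0.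
Proof. by rewrite pA_commX subrr. Qed.

Lemma rel_phi f l : (l ^+ N.-1 *: y + pA f) * (l *: x) - (l *: x) * (l ^+ N.-1 *: y + pA f)
   = (l *: x) ^+ N.
Proof.
have mZZ : forall (a b : k) (u v : A), (a *: u) * (b *: v) = (a * b) *: (u * v).
  by move=> a b u v; rewrite -scalerAl -scalerAr scalerA.
rewrite mulrDl mulrDr -[pA f * _]scalerAr -[_ *: x * pA f]scalerAl !mZZ pA_commX (mulrC l).
rewrite opprD addrACA -!scalerBr subrr scaler0 addr0 hrel exprZn -exprSr prednK //.
Qed.

Lemma hom_unique (h1 h2 : A -> A) : is_alg_hom h1 -> is_alg_hom h2 -> h1 x = h2 x -> h1 y = h2 y -> h1 =1 h2.
Proof. exact: (huniv hrel).2. Qed.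

Lemma id_vals (h : A -> A) : is_alg_hom h -> h x = x -> h y = y -> h =1 id.
Proof. by move=> hh hx hy; apply: hom_unique => //; apply: hom_id. Qed.

Lemma phi_exists f l : exists h : A -> A,
  [/\ is_alg_hom h, h x = l *: x & h y = l ^+ N.-1 *: y + pA f].
Proof. exact: ((huniv (rel_phi f l)).1). Qed.

Lemma comp_vals f l g m (h1 h2 : A -> A) :
  is_alg_hom h1 -> h1 x = l *: x -> h1 y = l ^+ N.-1 *: y + pA f ->
  is_alg_hom h2 -> h2 x = m *: x -> h2 y = m ^+ N.-1 *: y + pA g ->
  (h1 \o h2) x = (l * m) *: x /\
  (h1 \o h2) y = (l * m) ^+ N.-1 *: y + pA (m ^+ N.-1 *: f + poly_scale g l).
Proof.
move=> hh1 h1x h1y hh2 h2x h2y; split => /=.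
  by rewrite h2x (homZ hh1) h1x scalerA mulrC.
rewrite h2y (homD hh1) (homZ hh1) (hom_pA hh1) h1x h1y polyA_scale.
by rewrite scalerDr scalerA pAD pAZ addrA exprMn mulrC.
Qed.

Lemma phi_bij f l (h : A -> A) : l != 0 -> is_alg_hom h -> h x = l *: x ->
  h y = l ^+ N.-1 *: y + pA f -> bijective h.
Proof.
move=> nl hh hx hy.
set m := l^-1; set c := - (m ^+ N.-1); set g := poly_scale (c *: f) m.
have [h' [hh' h'x h'y]] := phi_exists g m.
have [c1x c1y] := comp_vals hh hx hy hh' h'x h'y.
have [c2x c2y] := comp_vals hh' h'x h'y hh hx hy.
have lm : l * m = 1 by rewrite /m mulfV.
have ml : m * l = 1 by rewrite /m mulVf.
exists h' => a.
  apply: (id_vals (hom_comp hh hh')).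
    by rewrite c2x ml scale1r.
  rewrite c2y ml expr1n scale1r /g ps_scale scalerA /c mulrN -exprMn lm expr1n.
  by rewrite scaleN1r addNr pA0 addr0.
apply: (id_vals (hom_comp hh' hh)).
  by rewrite c1x lm scale1r.
rewrite c1y lm expr1n scale1r /g ps_comp ml ps1 /c scaleNr addrN pA0 addr0 //.
Qed.

Lemma is_phi_unique f l (p1 p2 : A -> A) : is_phi N x y f l p1 -> is_phi N x y f l p2 -> p1 =1 p2.
Proof.
move=> [[h1 _] x1 y1] [[h2 _] x2 y2]; apply: hom_unique => //; by rewrite ?x1 ?x2 ?y1 ?y2.
Qed.

Lemma part1 f l : l != 0 -> exists phi : A -> A, is_phi N x y f l phi /\
   forall psi : A -> A, is_phi N x y f l psi -> psi =1 phi.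
Proof.
move=> nl; have [h [hh hx hy]] := phi_exists f l.
have ph : is_phi N x y f l h by split => //; split => //; apply: phi_bij nl hh hx hy.
by exists h; split => // psi hpsi; apply: is_phi_unique hpsi ph.
Qed.

Lemma x_neq0 : x != 0.
Proof. by apply/eqP; rewrite -pAX -pA0 => /pA_inj /eqP; rewrite polyX_eq0. Qed.

Lemma pi_exists : exists pi : A -> {poly k}, [/\ is_alg_hom pi, pi x = 0 & pi y = 'X].
Proof.
apply: (huniv _).1.
by rewrite mulr0 mul0r subrr expr0n eqn0Ngt hN.
Qed.

Lemma ker_aut (g : A -> A) : is_alg_hom g -> exists u, g x = x * u.
Proof.
move=> hg; have [pi [hp px py]] := pi_exists.
have hc := hom_comp hg hp.
apply: (kerpi hp px py); apply/eqP.
have : pi (g x) ^+ N == 0.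
  rewrite -(homX hp) -(homX hg) -hrel (homB hg) !(homM hg) (homB hp) !(homM hp).
  by rewrite mulrC subrr.
by rewrite expf_eq0 hN.
Qed.

Lemma surj (psi : A -> A) : is_alg_aut psi -> exists f l, l != 0 /\ is_phi N x y f l psi.
Proof.
move=> [hp [g gK Kg]]; have hg := hom_inv hp gK Kg.
have [u Eu] := ker_aut hp; have [v Ev] := ker_aut hg.
have : x * (u * psi v - 1) = 0.
  by rewrite mulrBr mulr1 mulrA -Eu -(homM hp) -Ev Kg subrr.
case/domainA => [x0|]; first by move: x_neq0; rewrite x0 eqxx.
move/eqP; rewrite subr_eq0 => /eqP /unitA [c [nc Ec]].
have psix : psi x = c *: x by rewrite Eu Ec mulr_algr.
have Hc : c *: (psi y * x - x * psi y) = c *: (c ^+ N.-1 *: x ^+ N).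
  rewrite scalerBr scalerAr scalerAl -psix -(homM hp) -(homM hp) -(homB hp) hrel (homX hp) psix.
  by rewrite exprZn scalerA -exprS prednK.
have {}Hc := scalerI nc Hc.
have [f Ef] : exists f, psi y - c ^+ N.-1 *: y = pA f.
  apply: central_pA; apply/eqP; rewrite -subr_eq0 mulrBl mulrBr zr2 Hc.
  by rewrite -scalerAl -scalerAr -scalerBr hrel subrr.
exists f, c; split => //; split => //; first by split => //; exists g.
by rewrite -Ef addrC subrK.
Qed.

Lemma part2 (Phi : {poly k} -> k -> A -> A) :
  (forall f l, l != 0 -> is_phi N x y f l (Phi f l)) ->
  [/\ forall f g l m, l != 0 -> m != 0 ->
        Phi (bowtie_mul N (f, l) (g, m)).1 (bowtie_mul N (f, l) (g, m)).2 =1 Phi f l \o Phi g m,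
      forall f g l m, l != 0 -> m != 0 -> Phi f l =1 Phi g m -> f = g /\ l = m
    & forall psi, is_alg_aut psi -> exists f l, l != 0 /\ psi =1 Phi f l].
Proof.
move=> HP; split.
- move=> f g l m nl nm /=.
  have [[h1 b1] x1 y1] := HP f l nl; have [[h2 b2] x2 y2] := HP g m nm.
  have nlm : l * m != 0 by rewrite mulf_neq0.
  have [[h3 _] x3 y3] := HP (m ^+ N.-1 *: f + poly_scale g l) _ nlm.
  have [cx cy] := comp_vals h1 x1 y1 h2 x2 y2.
  apply: hom_unique; [exact: h3 | exact: hom_comp h2 h1 | by rewrite x3 cx | by rewrite y3 cy].
- move=> f g l m nl nm E.
  have [_ x1 y1] := HP f l nl; have [_ x2 y2] := HP g m nm.
  have lm : l = m.
    have pZ : forall c, c *: x = pA (c *: 'X) by move=> c; rewrite pAZ pAX.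
    have := E x; rewrite x1 x2 !pZ => /pA_inj /(congr1 (fun p : {poly k} => p`_1)).
    by rewrite !coefZ coefX eqxx !mulr1.
  split => //; move: (E y); rewrite y1 y2 lm => /addrI; exact: pA_inj.
- move=> psi /surj [f [l [nl hpsi]]]; exists f, l; split => //.
  exact: is_phi_unique hpsi (HP f l nl).
Qed.
End Main.

Theorem proposition2p4 (k : fieldType) (N : nat) (A : algType k) (x y : A) :
  [pchar k] =i pred0 -> (1 <= N)%N -> is_A_N N x y ->
  (forall (f : {poly k}) (l : k), l != 0 ->
     exists phi : A -> A, is_phi N x y f l phi /\
       forall psi : A -> A, is_phi N x y f l psi -> psi =1 phi) /\
  (forall Phi : {poly k} -> k -> A -> A,
     (forall (f : {poly k}) (l : k), l != 0 -> is_phi N x y f l (Phi f l)) ->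
     [/\ (* group homomorphism: product in k[x] ⋈ k^× goes to composition *)
         forall (f g : {poly k}) (l m : k), l != 0 -> m != 0 ->
           Phi (bowtie_mul N (f, l) (g, m)).1 (bowtie_mul N (f, l) (g, m)).2
             =1 Phi f l \o Phi g m,
         (* injective *)
         forall (f g : {poly k}) (l m : k), l != 0 -> m != 0 ->
           Phi f l =1 Phi g m -> f = g /\ l = m
       & (* onto Aut(A) *)
         forall psi : A -> A, is_alg_aut psi ->
           exists (f : {poly k}) (l : k), l != 0 /\ psi =1 Phi f l]).
Proof.
move=> hc hN [hrel huniv]; split.
  by move=> f l nl; exact: (part1 hN hrel huniv f nl).
by move=> Phi HP; exact: (part2 hN hrel huniv hc HP).
Qed.
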